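(* Let $M(C,\bar\xi,\pi)$ be a Myller configuration with Darboux frame $(\bar\xi,\bar\mu,\bar v)$ and invariants $G,K,T$, $(G,T)\neq(0,0)$ everywhere, and suppose $C$ is a $\bar\mu$-helix with fixed unit axis $\bar d_\mu$ and constant angle $\eta$, $\langle\bar\mu,\bar d_\mu\rangle=\cos\eta$. Then, for one choice of sign, $$\bar d_\mu=\mp\sin\eta\frac{T}{\sqrt{G^2+T^2}}\bar\xi+(\cos\eta)\bar\mu\mp\sin\eta\frac{G}{\sqrt{G^2+T^2}}\bar v.$$
   Context: Let $C$ be a smooth curve in $E^3$ parametrized by arclength $s$; primes denote $d/ds$. A Myller configuration $M(C,\bar\xi,\pi)$ consists of a smooth unit vector field $\bar\xi$ along $C$ and a smooth oriented plane field $\pi$ with $\bar\xi\in\pi$; $\bar v$ is the unit normal of $\pi$, $\bar\mu=\bar v\times\bar\xi$, and $\bar\xi'=G\bar\mu+K\bar v$, $\bar\mu'=-G\bar\xi+T\bar v$, $\bar v'=-K\bar\xi-T\bar\mu$. $C$ is a $\bar\mu$-helix if there are a constant unit vector $\bar d_\mu$ (axis) and a constant $\eta$ with $\langle\bar\mu,\bar d_\mu\rangle=\cos\eta$ along $C$. *)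

(* Defs.v *)
From Stdlib Require Import Reals.
From Coquelicot Require Import Coquelicot.
Open Scope R_scope.

Definition vec : Type := (R * R * R)%type.
Definition vx (u : vec) : R := fst (fst u).
Definition vy (u : vec) : R := snd (fst u).
Definition vz (u : vec) : R := snd u.
Definition mkv (a b c : R) : vec := (a, b, c).

Definition vadd (u w : vec) : vec := mkv (vx u + vx w) (vy u + vy w) (vz u + vz w).
Definition vscale (k : R) (u : vec) : vec := mkv (k * vx u) (k * vy u) (k * vz u).
Definition dot (u w : vec) : R := vx u * vx w + vy u * vy w + vz u * vz w.
Definition cross (u w : vec) : vec :=
  mkv (vy u * vz w - vz u * vy w) (vz u * vx w - vx u * vz w) (vx u * vy w - vy u * vx w).

Definition in_I (a b : Rbar) (s : R) : Prop := Rbar_lt a s /\ Rbar_lt s b.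

Definition smooth_on (a b : Rbar) (f : R -> R) : Prop :=
  forall (n : nat) (s : R), in_I a b s -> ex_derive (Derive_n f n) s.

Definition vsmooth_on (a b : Rbar) (F : R -> vec) : Prop :=
  smooth_on a b (fun s => vx (F s)) /\ smooth_on a b (fun s => vy (F s)) /\
  smooth_on a b (fun s => vz (F s)).

Definition is_vderive (F : R -> vec) (s : R) (F' : vec) : Prop :=
  is_derive (fun t => vx (F t)) s (vx F') /\
  is_derive (fun t => vy (F t)) s (vy F') /\
  is_derive (fun t => vz (F t)) s (vz F').

Definition myller_config (a b : Rbar) (C xi mu v : R -> vec) (G K T : R -> R) : Prop :=
  vsmooth_on a b C /\ vsmooth_on a b xi /\ vsmooth_on a b v /\
  (forall s, in_I a b s ->
     (exists C', is_vderive C s C' /\ dot C' C' = 1) /\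
     dot (xi s) (xi s) = 1 /\ dot (v s) (v s) = 1 /\ dot (xi s) (v s) = 0 /\
     mu s = cross (v s) (xi s) /\
     is_vderive xi s (vadd (vscale (G s) (mu s)) (vscale (K s) (v s))) /\
     is_vderive mu s (vadd (vscale (- G s) (xi s)) (vscale (T s) (v s))) /\
     is_vderive v s (vadd (vscale (- K s) (xi s)) (vscale (- T s) (mu s)))).

Definition mu_helix (a b : Rbar) (mu : R -> vec) (d : vec) (eta : R) : Prop :=
  dot d d = 1 /\ forall s, in_I a b s -> dot (mu s) d = cos eta.

(* Main.v *)
Require Import Defs.
From Stdlib Require Import Reals Lra Psatz Classical_Prop.
From Coquelicot Require Import Coquelicot.
Open Scope R_scope.

Lemma decomp_w (x1 x2 x3 v1 v2 v3 w1 w2 w3 : R) :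
  x1*x1+x2*x2+x3*x3 = 1 -> v1*v1+v2*v2+v3*v3 = 1 -> x1*v1+x2*v2+x3*v3 = 0 ->
  w1*x1+w2*x2+w3*x3 = 0 -> w1*v1+w2*v2+w3*v3 = 0 ->
  w1*(v2*x3-v3*x2)+w2*(v3*x1-v1*x3)+w3*(v1*x2-v2*x1) = 0 ->
  w1 = 0 /\ w2 = 0 /\ w3 = 0.
Proof.
  intros Hx Hv Hxv Hwx Hwv Hwm.
  set (m1 := v2*x3-v3*x2) in *. set (m2 := v3*x1-v1*x3) in *. set (m3 := v1*x2-v2*x1) in *.
  assert (Hm : m1*m1+m2*m2+m3*m3 = 1).
  { assert (E : m1*m1+m2*m2+m3*m3 = (v1*v1+v2*v2+v3*v3)*(x1*x1+x2*x2+x3*x3) - (x1*v1+x2*v2+x3*v3)^2)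
      by (unfold m1, m2, m3; ring).
    rewrite E, Hx, Hv, Hxv; ring. }
  (* m x w = x (v.w) - v (x.w) *)
  assert (C1 : m2*w3 - m3*w2 = x1*(w1*v1+w2*v2+w3*v3) - v1*(w1*x1+w2*x2+w3*x3)) by (unfold m2,m3; ring).
  assert (C2 : m3*w1 - m1*w3 = x2*(w1*v1+w2*v2+w3*v3) - v2*(w1*x1+w2*x2+w3*x3)) by (unfold m1,m3; ring).
  assert (C3 : m1*w2 - m2*w1 = x3*(w1*v1+w2*v2+w3*v3) - v3*(w1*x1+w2*x2+w3*x3)) by (unfold m1,m2; ring).
  rewrite Hwv, Hwx in C1, C2, C3.
  assert (L : (m1*m1+m2*m2+m3*m3)*(w1*w1+w2*w2+w3*w3) =
     (w1*m1+w2*m2+w3*m3)^2 + (m2*w3 - m3*w2)^2 + (m3*w1 - m1*w3)^2 + (m1*w2 - m2*w1)^2) by ring.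
  rewrite Hm, Hwm, C1, C2, C3 in L.
  assert (w1*w1+w2*w2+w3*w3 = 0) by lra.
  repeat split; nra.
Qed.

Lemma decomp (x v d : vec) : dot x x = 1 -> dot v v = 1 -> dot x v = 0 ->
  d = vadd (vadd (vscale (dot d x) x) (vscale (dot d (cross v x)) (cross v x))) (vscale (dot d v) v).
Proof.
  destruct x as [[x1 x2] x3], v as [[v1 v2] v3], d as [[d1 d2] d3].
  unfold dot, vadd, vscale, cross, mkv, vx, vy, vz; simpl. intros Hx Hv Hxv.
  set (a := d1*x1+d2*x2+d3*x3). set (c := d1*v1+d2*v2+d3*v3).
  set (b := d1 * (v2 * x3 - v3 * x2) + d2 * (v3 * x1 - v1 * x3) + d3 * (v1 * x2 - v2 * x1)).
  destruct (decomp_w x1 x2 x3 v1 v2 v3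
    (d1 - (a*x1 + b*(v2 * x3 - v3 * x2) + c*v1))
    (d2 - (a*x2 + b*(v3 * x1 - v1 * x3) + c*v2))
    (d3 - (a*x3 + b*(v1 * x2 - v2 * x1) + c*v3)) Hx Hv Hxv) as [W1 [W2 W3]].
  - assert (E: forall X, X = a*(1 - (x1*x1+x2*x2+x3*x3)) - c*(x1*v1+x2*v2+x3*v3) -> X = 0).
    { intros X ->. rewrite Hx, Hxv. ring. }
    apply E. unfold a, b, c. ring.
  - assert (E: forall X, X = c*(1 - (v1*v1+v2*v2+v3*v3)) - a*(x1*v1+x2*v2+x3*v3) -> X = 0).
    { intros X ->. rewrite Hv, Hxv. ring. }
    apply E. unfold a, b, c. ring.
  - assert (E: forall X, X = b*(1 - ((v1*v1+v2*v2+v3*v3)*(x1*x1+x2*x2+x3*x3) - (x1*v1+x2*v2+x3*v3)^2)) -> X = 0).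
    { intros X ->. rewrite Hv, Hx, Hxv. ring. }
    apply E. unfold a, b, c. ring.
  - f_equal; [f_equal|]; lra.
Qed.

Lemma cont_mult (f g : R -> R) x : continuous f x -> continuous g x ->
  continuous (fun t => f t * g t) x.
Proof. intros; exact (continuous_mult f g x H H0). Qed.
Lemma cont_plus (f g : R -> R) x : continuous f x -> continuous g x ->
  continuous (fun t => f t + g t) x.
Proof. intros; exact (continuous_plus f g x H H0). Qed.
Lemma cont_opp (f : R -> R) x : continuous f x -> continuous (fun t => - f t) x.
Proof. intros; exact (continuous_opp f x H). Qed.

Lemma cont_dot (F H : R -> vec) t :
  continuous (fun t => vx (F t)) t -> continuous (fun t => vy (F t)) t -> continuous (fun t => vz (F t)) t ->
  continuous (fun t => vx (H t)) t -> continuous (fun t => vy (H t)) t -> continuous (fun t => vz (H t)) t ->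
  continuous (fun t => dot (F t) (H t)) t.
Proof.
  intros. unfold dot.
  apply cont_plus; [apply cont_plus|]; apply cont_mult; assumption.
Qed.

Lemma in_I_between (a b : Rbar) s1 s2 x : in_I a b s1 -> in_I a b s2 -> s1 <= x <= s2 -> in_I a b x.
Proof.
  intros [H1 H2] [H3 H4] [Hx1 Hx2]. split.
  - apply Rbar_lt_le_trans with (Finite s1); [exact H1| exact Hx1].
  - apply Rbar_le_lt_trans with (Finite s2); [exact Hx2| exact H4].
Qed.

Lemma sign_const (a b : Rbar) (f : R -> R) :
  (forall t, in_I a b t -> continuity_pt f t) -> (forall t, in_I a b t -> f t <> 0) ->
  forall s1 s2, in_I a b s1 -> in_I a b s2 -> 0 < f s1 * f s2.
Proof.
  intros Hc Hn.
  assert (key : forall s1 s2, s1 < s2 -> in_I a b s1 -> in_I a b s2 -> 0 < f s1 * f s2).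
  { intros s1 s2 Hlt H1 H2.
    destruct (Rlt_or_le 0 (f s1 * f s2)) as [h|h]; [exact h|exfalso].
    pose proof (Hn s1 H1) as n1. pose proof (Hn s2 H2) as n2.
    destruct (Rlt_or_le (f s1) 0) as [h1|h1].
    - assert (h2 : 0 < f s2).
      { destruct (Rlt_or_le 0 (f s2)); auto. exfalso. destruct H; [|contradiction]. nra. }
      destruct (Ranalysis5.IVT_interv f s1 s2) as [z [Hz Hfz]]; auto.
      { intros y Hy. apply Hc. exact (in_I_between a b s1 s2 y H1 H2 Hy). }
      exact (Hn z (in_I_between a b s1 s2 z H1 H2 Hz) Hfz).
    - assert (h1' : 0 < f s1) by (destruct h1; [auto|congruence]).
      assert (h2 : f s2 < 0).
      { destruct (Rlt_or_le (f s2) 0); auto. exfalso. destruct H; [nra|congruence]. }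
      destruct (Ranalysis5.IVT_interv (opp_fct f) s1 s2) as [z [Hz Hfz]]; auto.
      { intros y Hy. apply continuity_pt_opp. apply Hc. exact (in_I_between a b s1 s2 y H1 H2 Hy). }
      { unfold opp_fct; lra. }
      { unfold opp_fct; lra. }
      unfold opp_fct in Hfz.
      apply (Hn z (in_I_between a b s1 s2 z H1 H2 Hz)). lra. }
  intros s1 s2 H1 H2.
  destruct (Rtotal_order s1 s2) as [h|[h|h]].
  - auto.
  - subst. pose proof (Hn s2 H2). nra.
  - rewrite Rmult_comm. auto.
Qed.

Lemma alg (G T al ga S : R) : (G, T) <> (0, 0) -> - G * al + T * ga = 0 -> al^2 + ga^2 = S^2 ->
  al = (al*T + ga*G) / sqrt (G^2+T^2) * (T / sqrt (G^2+T^2)) /\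
  ga = (al*T + ga*G) / sqrt (G^2+T^2) * (G / sqrt (G^2+T^2)) /\
  ((al*T + ga*G) / sqrt (G^2+T^2))^2 = S^2 /\ 0 < sqrt (G^2+T^2).
Proof.
  intros HGT H1 H2.
  assert (Hp : 0 < G^2+T^2).
  { destruct (Req_dec G 0) as [->|hG]; destruct (Req_dec T 0) as [->|hT];
      [congruence| nra | nra | nra]. }
  assert (HN : 0 < sqrt (G^2+T^2)) by (apply sqrt_lt_R0; exact Hp).
  assert (HN2 : sqrt (G^2+T^2) * sqrt (G^2+T^2) = G^2+T^2) by (apply sqrt_sqrt; lra).
  set (N := sqrt (G^2+T^2)) in *.
  assert (Nn : N <> 0) by lra.
  assert (Hp' : G^2+T^2 <> 0) by lra.
  repeat split; try exact HN.
  - replace ((al*T+ga*G)/N*(T/N)) with ((al*T+ga*G)*T/(N*N)) by (field; exact Nn).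
    rewrite HN2. field_simplify_eq; [|exact Hp']. 
    assert (E: G*(-G*al+T*ga)=0) by (rewrite H1; ring). nra.
  - replace ((al*T+ga*G)/N*(G/N)) with ((al*T+ga*G)*G/(N*N)) by (field; exact Nn).
    rewrite HN2. field_simplify_eq; [|exact Hp']. 
    assert (E: T*(-G*al+T*ga)=0) by (rewrite H1; ring). nra.
  - replace (((al*T+ga*G)/N)^2) with ((al*T+ga*G)^2/(N*N)) by (field; exact Nn).
    rewrite HN2. 
    replace ((al*T+ga*G)^2) with ((al^2+ga^2)*(G^2+T^2) - (-G*al+T*ga)^2) by ring.
    rewrite H1, H2. field. exact Hp'.
Qed.

Lemma dot_derive F s F' d : is_vderive F s F' -> is_derive (fun t => dot (F t) d) s (dot F' d).
Proof.
  intros [h1 [h2 h3]]. unfold dot.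
  apply (is_derive_plus (fun t => vx (F t) * vx d + vy (F t) * vy d) (fun t => vz (F t) * vz d)).
  apply (is_derive_plus (fun t => vx (F t) * vx d) (fun t => vy (F t) * vy d)).
  - exact (is_derive_scal_l (fun t => vx (F t)) s (vx F') (vx d) h1).
  - exact (is_derive_scal_l (fun t => vy (F t)) s (vy F') (vy d) h2).
  - exact (is_derive_scal_l (fun t => vz (F t)) s (vz F') (vz d) h3).
Qed.

Lemma loc_I (a b : Rbar) s : in_I a b s -> locally s (in_I a b).
Proof.
  intros Hs. exact (open_and _ _ (open_Rbar_gt a) (open_Rbar_lt b) s Hs).
Qed.

Lemma const_deriv (f : R -> R) (a b : Rbar) c s l : in_I a b s ->
  (forall t, in_I a b t -> f t = c) -> is_derive f s l -> l = 0.
Proof.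
  intros Hs Hf Hd.
  assert (H0 : is_derive f s 0).
  { apply (is_derive_ext_loc (fun _ => c)).
    - apply (filter_imp (in_I a b)); [|exact (loc_I a b s Hs)].
      intros t Ht. symmetry. auto.
    - exact (is_derive_const (K:=R_AbsRing) (V:=R_NormedModule) c s). }
  rewrite <- (is_derive_unique _ _ _ Hd). exact (is_derive_unique _ _ _ H0).
Qed.

Lemma dot_comm u w : dot u w = dot w u.
Proof. unfold dot; ring. Qed.

Lemma dot_lin d x y z p q r :
  dot d (vadd (vadd (vscale p x) (vscale q y)) (vscale r z)) = p*dot d x + q*dot d y + r*dot d z.
Proof.
  destruct x as [[x1 x2] x3], y as [[y1 y2] y3], z as [[z1 z2] z3], d as [[d1 d2] d3].
  unfold dot, vadd, vscale, mkv, vx, vy, vz; simpl; ring.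
Qed.

Lemma point_facts (a b : Rbar) (xi mu v : R->vec) (G T : R->R) d eta s :
  dot (xi s) (xi s) = 1 -> dot (v s) (v s) = 1 -> dot (xi s) (v s) = 0 -> mu s = cross (v s) (xi s) ->
  is_vderive mu s (vadd (vscale (- G s) (xi s)) (vscale (T s) (v s))) ->
  in_I a b s -> dot d d = 1 -> (forall t, in_I a b t -> dot (mu t) d = cos eta) ->
  d = vadd (vadd (vscale (dot d (xi s)) (xi s)) (vscale (cos eta) (mu s))) (vscale (dot d (v s)) (v s)) /\
  (dot d (xi s))^2 + (dot d (v s))^2 = (sin eta)^2 /\ - G s * dot d (xi s) + T s * dot d (v s) = 0.
Proof.
  intros Hx Hv Hxv Hmu Hdmu Hs Hdd Hh.
  assert (P1 : d = vadd (vadd (vscale (dot d (xi s)) (xi s)) (vscale (cos eta) (mu s))) (vscale (dot d (v s)) (v s))).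
  { pose proof (decomp (xi s) (v s) d Hx Hv Hxv) as E. rewrite <- Hmu in E.
    rewrite (dot_comm d (mu s)), (Hh s Hs) in E. exact E. }
  split; [exact P1|split].
  - assert (E : dot d d = dot d (vadd (vadd (vscale (dot d (xi s)) (xi s)) (vscale (cos eta) (mu s))) (vscale (dot d (v s)) (v s)))) by (rewrite <- P1; reflexivity).
    rewrite dot_lin, Hdd, (dot_comm d (mu s)), (Hh s Hs) in E.
    pose proof (sin2_cos2 eta) as SC. unfold Rsqr in SC. nra.
  - pose proof (const_deriv _ a b (cos eta) s _ Hs Hh (dot_derive mu s _ d Hdmu)) as E.
    rewrite <- E. rewrite (dot_comm d (xi s)), (dot_comm d (v s)).
    destruct (xi s) as [[x1 x2] x3], (v s) as [[v1 v2] v3], d as [[d1 d2] d3].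
    unfold dot, vadd, vscale, mkv, vx, vy, vz; simpl; ring.
Qed.

Lemma frame_mu x v : dot x x = 1 -> dot v v = 1 -> dot x v = 0 ->
  dot (cross v x) (cross v x) = 1 /\ dot v (cross v x) = 0.
Proof.
  destruct x as [[x1 x2] x3], v as [[v1 v2] v3].
  unfold dot, cross, mkv, vx, vy, vz; simpl. intros Hx Hv Hxv. split.
  - replace ((v2 * x3 - v3 * x2) * (v2 * x3 - v3 * x2) + (v3 * x1 - v1 * x3) * (v3 * x1 - v1 * x3) +
       (v1 * x2 - v2 * x1) * (v1 * x2 - v2 * x1)) with
      ((v1*v1+v2*v2+v3*v3)*(x1*x1+x2*x2+x3*x3) - (x1*v1+x2*v2+x3*v3)^2) by ring.
    rewrite Hx, Hv, Hxv; ring.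
  - ring.
Qed.

Lemma Dvec (F : R -> vec) t F' : is_vderive F t F' ->
  mkv (Derive (fun u => vx (F u)) t) (Derive (fun u => vy (F u)) t) (Derive (fun u => vz (F u)) t) = F'.
Proof.
  intros [h1 [h2 h3]]. apply is_derive_unique in h1, h2, h3. simpl in h1, h2, h3. rewrite h1, h2, h3.
  destruct F' as [[]]; reflexivity.
Qed.

Lemma vcont (F : R -> vec) t F' : is_vderive F t F' ->
  continuous (fun t => vx (F t)) t /\ continuous (fun t => vy (F t)) t /\ continuous (fun t => vz (F t)) t.
Proof.
  intros [h1 [h2 h3]]. repeat split.
  - exact (ex_derive_continuous (K:=R_AbsRing) (V:=R_NormedModule) _ t (ex_intro _ _ h1)).
  - exact (ex_derive_continuous (K:=R_AbsRing) (V:=R_NormedModule) _ t (ex_intro _ _ h2)).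
  - exact (ex_derive_continuous (K:=R_AbsRing) (V:=R_NormedModule) _ t (ex_intro _ _ h3)).
Qed.

Lemma scont (a b : Rbar) (f : R -> R) t : smooth_on a b f -> in_I a b t -> continuous (Derive f) t.
Proof.
  intros H Ht. exact (ex_derive_continuous (K:=R_AbsRing) (V:=R_NormedModule) _ t (H 1%nat t Ht)).
Qed.

Lemma vec_eq3 p q r p' r' x y z : p = p' -> r = r' ->
  vadd (vadd (vscale p x) (vscale q y)) (vscale r z) = vadd (vadd (vscale p' x) (vscale q y)) (vscale r' z).
Proof. intros; subst; reflexivity. Qed.

Theorem corollary18 (a b : Rbar) (C xi mu v : R -> vec) (G K T : R -> R)
  (d : vec) (eta : R) :
  myller_config a b C xi mu v G K T ->
  (forall s, in_I a b s -> (G s, T s) <> (0, 0)) ->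
  mu_helix a b mu d eta ->
  exists eps : R, (eps = 1 \/ eps = -1) /\
    forall s, in_I a b s ->
      d = vadd (vadd
            (vscale (- eps * sin eta * (T s / sqrt (G s ^ 2 + T s ^ 2))) (xi s))
            (vscale (cos eta) (mu s)))
            (vscale (- eps * sin eta * (G s / sqrt (G s ^ 2 + T s ^ 2))) (v s)).
Proof.
  intros [_ [Hxs [Hvs Hpt]]] HGT [Hdd Hh].
  set (lam := fun s => (dot d (xi s) * T s + dot d (v s) * G s) / sqrt (G s ^ 2 + T s ^ 2)).
  assert (PF : forall s, in_I a b s ->
    d = vadd (vadd (vscale (dot d (xi s)) (xi s)) (vscale (cos eta) (mu s))) (vscale (dot d (v s)) (v s)) /\
    dot d (xi s) = lam s * (T s / sqrt (G s ^ 2 + T s ^ 2)) /\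
    dot d (v s) = lam s * (G s / sqrt (G s ^ 2 + T s ^ 2)) /\
    lam s ^ 2 = sin eta ^ 2 /\ 0 < sqrt (G s ^ 2 + T s ^ 2)).
  { intros s Hs. destruct (Hpt s Hs) as [_ [Hx [Hv [Hxv [Hmu [_ [Dmu _]]]]]]].
    destruct (point_facts a b xi mu v G T d eta s Hx Hv Hxv Hmu Dmu Hs Hdd Hh) as [P1 [P2 P3]].
    destruct (alg (G s) (T s) (dot d (xi s)) (dot d (v s)) (sin eta) (HGT s Hs) P3 P2) as [A1 [A2 [A3 A4]]].
    unfold lam. auto. }
  destruct (Req_dec (sin eta) 0) as [S0|S0].
  { exists 1. split; [left; reflexivity|]. intros s Hs.
    destruct (PF s Hs) as [P1 [A1 [A2 [A3 A4]]]].
    rewrite S0 in A3. assert (L0 : lam s = 0) by nra.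
    rewrite P1 at 1. apply vec_eq3; rewrite A1 || rewrite A2; rewrite L0, S0; ring. }
  destruct (Classical_Prop.classic (exists s0, in_I a b s0)) as [[s0 Hs0]|Hno].
  2:{ exists 1. split; [left; reflexivity|]. intros s Hs. exfalso. apply Hno. eauto. }
  set (Dxi := fun t => mkv (Derive (fun u => vx (xi u)) t) (Derive (fun u => vy (xi u)) t) (Derive (fun u => vz (xi u)) t)).
  set (Dv := fun t => mkv (Derive (fun u => vx (v u)) t) (Derive (fun u => vy (v u)) t) (Derive (fun u => vz (v u)) t)).
  set (h := fun t => dot d (xi t) * (- dot (Dv t) (mu t)) + dot d (v t) * dot (Dxi t) (mu t)).
  assert (Hhe : forall t, in_I a b t -> h t = lam t * sqrt (G t ^ 2 + T t ^ 2)).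
  { intros t Ht. destruct (Hpt t Ht) as [_ [Hx [Hv [Hxv [Hmu [Dxi_ [_ Dv_]]]]]]].
    destruct (PF t Ht) as [_ [_ [_ [_ A4]]]].
    destruct (frame_mu (xi t) (v t) Hx Hv Hxv) as [M1 M2]. rewrite <- Hmu in M1, M2.
    unfold h. replace (Dv t) with (vadd (vscale (- K t) (xi t)) (vscale (- T t) (mu t)))
      by (symmetry; exact (Dvec v t _ Dv_)).
    replace (Dxi t) with (vadd (vscale (G t) (mu t)) (vscale (K t) (v t)))
      by (symmetry; exact (Dvec xi t _ Dxi_)).
    assert (E1 : dot (vadd (vscale (- K t) (xi t)) (vscale (- T t) (mu t))) (mu t) = - K t * dot (xi t) (mu t) - T t * dot (mu t) (mu t))
      by (destruct (xi t) as [[]], (mu t) as [[]]; unfold dot, vadd, vscale, mkv, vx, vy, vz; simpl; ring).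
    assert (E2 : dot (vadd (vscale (G t) (mu t)) (vscale (K t) (v t))) (mu t) = G t * dot (mu t) (mu t) + K t * dot (v t) (mu t))
      by (destruct (v t) as [[]], (mu t) as [[]]; unfold dot, vadd, vscale, mkv, vx, vy, vz; simpl; ring).
    assert (E3 : dot (xi t) (mu t) = 0) by (rewrite Hmu; destruct (xi t) as [[]], (v t) as [[]];
         unfold dot, cross, mkv, vx, vy, vz; simpl; ring).
    rewrite E1, E2, E3, M1, M2. unfold lam. field. lra. }
  assert (Hhc : forall t, in_I a b t -> continuity_pt h t).
  { intros t Ht. apply continuity_pt_filterlim. change (continuous h t).
    destruct (Hpt t Ht) as [_ [_ [_ [_ [_ [Dxi_ [Dmu_ Dv_]]]]]]].
    destruct (vcont xi t _ Dxi_) as [c1 [c2 c3]].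
    destruct (vcont mu t _ Dmu_) as [c4 [c5 c6]].
    destruct (vcont v t _ Dv_) as [c7 [c8 c9]].
    destruct Hxs as [s1 [s2 s3]]. destruct Hvs as [s4 [s5 s6]].
    pose proof (continuous_const (U:=R_UniformSpace) (vx d) t) as k1.
    pose proof (continuous_const (U:=R_UniformSpace) (vy d) t) as k2.
    pose proof (continuous_const (U:=R_UniformSpace) (vz d) t) as k3.
    unfold h. apply cont_plus; apply cont_mult; try apply cont_opp; apply cont_dot; try assumption;
      first [exact (scont a b _ t s1 Ht) | exact (scont a b _ t s2 Ht) | exact (scont a b _ t s3 Ht)
            | exact (scont a b _ t s4 Ht) | exact (scont a b _ t s5 Ht) | exact (scont a b _ t s6 Ht)]. }
  assert (Hhn : forall t, in_I a b t -> h t <> 0).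
  { intros t Ht. rewrite (Hhe t Ht). destruct (PF t Ht) as [_ [_ [_ [A3 A4]]]].
    intro Z. apply Rmult_integral in Z. destruct Z as [Z|Z]; [|lra].
    rewrite Z in A3. apply S0. nra. }
  destruct (PF s0 Hs0) as [_ [_ [_ [B3 B4]]]].
  exists (- lam s0 / sin eta). split.
  { assert (F : (lam s0 - sin eta) * (lam s0 + sin eta) = 0) by nra.
    apply Rmult_integral in F. destruct F as [F|F]; [right|left]; field_simplify; try exact S0;
      [replace (lam s0) with (sin eta) by lra | replace (lam s0) with (- sin eta) by lra]; field; exact S0. }
  intros s Hs.
  destruct (PF s Hs) as [P1 [A1 [A2 [A3 A4]]]].
  pose proof (sign_const a b h Hhc Hhn s0 s Hs0 Hs) as SG.
  rewrite (Hhe s0 Hs0), (Hhe s Hs) in SG.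
  assert (Lp : 0 < lam s0 * lam s).
  { assert (0 < sqrt (G s0 ^ 2 + T s0 ^ 2) * sqrt (G s ^ 2 + T s ^ 2)) by (apply Rmult_lt_0_compat; assumption).
    nra. }
  assert (Leq : lam s = lam s0).
  { assert (F : (lam s - lam s0) * (lam s + lam s0) = 0) by nra.
    apply Rmult_integral in F. destruct F as [F|F]; [lra|nra]. }
  replace (- (- lam s0 / sin eta) * sin eta) with (lam s) by (rewrite Leq; field; exact S0).
  rewrite P1 at 1. apply vec_eq3; assumption.
Qed.
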